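(* Let $\Sigma$ be a finite set of symbols, let $\mathbf{x}\in\Sigma^*$, and let $S=\{(T_1,\delta_1),\dots,(T_n,\delta_n)\}$ be a perturbation space with $T_k=(\varphi_k,f_k)$, $\varphi_k:\Sigma^{s_k}\to\{0,1\}$, $f_k:\Sigma^{s_k}\to 2^{\Sigma^{t_k}}$, $s_k\ge 1$, $t_k\ge 0$. For $S'\in\mathcal{D}(S)$ and integers $i,j$ let $$H_{i,j}^{S'}=\{\mathrm{lstm}(\mathbf{z},h_0)\mid \mathbf{z}\in S'^{=}(\mathbf{x}_{1:j}),\ |\mathbf{z}|=i\},$$ with the convention $H_{i,j}^{S'}=\emptyset$ whenever $i<0$ or $j<0$. Then $H_{0,0}^{\varnothing}=\{0^d\}$, and for every $S'=\{(T_k,\delta'_k)\}_k\in\mathcal{D}(S)$ and all integers $i\ge 0$, $j\ge 1$, $$H_{i,j}^{S'}=\{\mathrm{lstm}(x_j,h)\mid h\in H_{i-1,j-1}^{S'}\}\ \cup \bigcup_{\substack{1\le k\le n,\ \delta'_k\ge 1,\ j\ge s_k\\ \varphi_k(\mathbf{x}_{j-s_k+1:j})=1}}\{\mathrm{lstm}(\mathbf{z},h)\mid \mathbf{z}\in f_k(\mathbf{x}_{j-s_k+1:j}),\ h\in H_{i-t_k,\,j-s_k}^{S'_{k\downarrow}}\}.$$ That is, the sets $H_{i,j}^{S'}$ defined directly coincide with those computed bottom-up from the base case $H_{0,0}^{\varnothing}=\{0^d\}$ by this recurrence.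
   Context: Strings: $\Sigma^*$ is the set of finite strings over $\Sigma$; for $\mathbf{x}\in\Sigma^*$, $x_i$ is its $i$-th symbol, $\mathbf{x}_{a:b}=x_a\cdots x_b$ (empty if $b<a$), $|\mathbf{x}|$ its length, $\epsilon$ the empty string. A string transformation is a pair $T=(\varphi,f)$ with match function $\varphi:\Sigma^{s}\to\{0,1\}$ and replace function $f:\Sigma^{s}\to 2^{\Sigma^{t}}$. A perturbation space is a finite set $S=\{(T_1,\delta_1),\dots,(T_n,\delta_n)\}$ with $\delta_k\in\mathbb{N}$. Its tight version $S^{=}$ maps a string $\mathbf{x}$ to the set $S^{=}(\mathbf{x})$ of all strings $\mathbf{z}$ for which there is a factorization $\mathbf{x}=\mathbf{u}_0\mathbf{w}_1\mathbf{u}_1\cdots\mathbf{w}_m\mathbf{u}_m$ (pairwise non-overlapping matched substrings $\mathbf{w}_l$) and indices $k_1,\dots,k_m$ with $\varphi_{k_l}(\mathbf{w}_l)=1$, $\mathbf{z}=\mathbf{u}_0\mathbf{w}'_1\mathbf{u}_1\cdots\mathbf{w}'_m\mathbf{u}_m$ with $\mathbf{w}'_l\in f_{k_l}(\mathbf{w}_l)$, and such that for each $k$ exactly $\delta_k$ of the $k_l$ equal $k$ (the ordinary space $S(\mathbf{x})$ is defined the same way with ''at most $\delta_k$''). The decomposition $\mathcal{D}(S)$ is the set of all perturbation spaces $\{(T_1,\delta'_1),\dots,(T_n,\delta'_n)\}$ with $0\le\delta'_k\le\delta_k$ (so $|\mathcal{D}(S)|=\prod_k(\delta_k+1)$); $\varnothing$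 denotes the element with all $\delta'_k=0$, for which $\varnothing^{=}(\mathbf{x})=\{\mathbf{x}\}$. For $S'\in\mathcal{D}(S)$ with $\delta'_k\ge1$, $S'_{k\downarrow}$ is $S'$ with $\delta'_k$ decreased by $1$. LSTM: $\mathrm{lstm}:\Sigma\times\mathbb{R}^d\to\mathbb{R}^d$ is a fixed function (an LSTM cell applied to the symbol's embedding and the concatenated hidden/cell state); it is extended to strings by $\mathrm{lstm}(\epsilon,h)=h$ and $\mathrm{lstm}(\mathbf{z},h)=\mathrm{lstm}(z_{|\mathbf{z}|},\mathrm{lstm}(\mathbf{z}_{1:|\mathbf{z}|-1},h))$; $h_0=0^d$. *)

(* Defs.v *)
From HB Require Import structures.
From mathcomp Require Import all_boot all_order all_algebra.
From mathcomp Require Import reals.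
From Stdlib Require List.
Set Implicit Arguments. Unset Strict Implicit. Unset Printing Implicit Defensive.
Import Order.TTheory GRing.Theory Num.Theory.

(* A string transformation T = (phi, f) with phi : Sigma^s -> {0,1},
   f : Sigma^s -> 2^(Sigma^t). Subsets of Sigma^t are predicates. *)
Record trans (Sigma : finType) := Trans {
  tr_s : nat;
  tr_t : nat;
  tr_phi : tr_s.-tuple Sigma -> bool;
  tr_f : tr_s.-tuple Sigma -> tr_t.-tuple Sigma -> Prop }.

(* x_{a:b} = x_a ... x_b (1-indexed, empty if b < a). *)
Definition substr (Sigma : Type) (x : seq Sigma) (a b : nat) : seq Sigma :=
  drop a.-1 (take b x).

Section Space.
Variables (Sigma : finType) (n : nat) (T : 'I_n -> trans Sigma).

(* One block of a factorization: a transformation index k, the matched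
   substring w (in Sigma^{s_k}), its replacement w' (in Sigma^{t_k}), and
   the untouched string u following it. *)
Definition piece := {k : 'I_n & ((tr_s (T k)).-tuple Sigma *
                                 (tr_t (T k)).-tuple Sigma * seq Sigma)%type}.

Definition piece_src (p : piece) : seq Sigma :=
  let: existT _ (w, _, u) := p in tval w ++ u.
Definition piece_tgt (p : piece) : seq Sigma :=
  let: existT k (_, w', u) := p in tval w' ++ u.
Definition piece_valid (p : piece) : Prop :=
  let: existT k (w, w', u) := p in tr_phi w = true /\ tr_f w w'.

(* The tight perturbation space S^= for S = {(T_k, delta_k)}_k:
   z \in S^=(x) iff x = u0 w1 u1 ... wm um, z = u0 w'1 u1 ... w'm um,
   phi_{k_l}(w_l) = 1, w'_l \in f_{k_l}(w_l), and exactly delta_k of the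
   k_l equal k. *)
Definition tight (delta : 'I_n -> nat) (x z : seq Sigma) : Prop :=
  exists (u0 : seq Sigma) (ps : seq piece),
    x = u0 ++ flatten (map piece_src ps) /\
    z = u0 ++ flatten (map piece_tgt ps) /\
    List.Forall piece_valid ps /\
    forall k : 'I_n, count (fun p : piece => tag p == k) ps = delta k.

Definition dec (delta : 'I_n -> nat) (k : 'I_n) : 'I_n -> nat :=
  fun k' => if k' == k then (delta k).-1 else delta k'.

End Space.

Definition lstm_str (Sigma : Type) (V : Type) (lstm : Sigma -> V -> V)
  (z : seq Sigma) (h : V) : V :=
  foldl (fun h a => lstm a h) h z.

Definition Hset (R : realType) (d : nat) (Sigma : finType) (n : nat)
  (T : 'I_n -> trans Sigma) (lstm : Sigma -> 'rV[R]_d -> 'rV[R]_d)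
  (x : seq Sigma) (delta' : 'I_n -> nat) (i j : int) (h : 'rV[R]_d) : Prop :=
  (0 <= i)%R /\ (0 <= j)%R /\
  exists z : seq Sigma,
    tight T delta' (substr x 1 `|j|%N) z /\ Posz (size z) = i /\
    h = lstm_str lstm z 0%R.

(* Main.v *)
Require Import Defs.
From HB Require Import structures.
From mathcomp Require Import all_boot all_order all_algebra.
From mathcomp Require Import reals.
From mathcomp Require Import zify.
From Stdlib Require List.
Import Order.TTheory GRing.Theory Num.Theory.
Set Warnings "-notation-overridden -ambiguous-paths".

Lemma count_rcons (X : Type) (P : pred X) s x : count P (rcons s x) = (count P s + P x)%N.
Proof. by rewrite -cats1 count_cat /= addn0. Qed.

Section H.
Variables (Sigma : finType) (n : nat) (T : 'I_n -> trans Sigma).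

Lemma tight_snoc D y z a : tight T D y z -> tight T D (rcons y a) (rcons z a).
Proof.
case=> u0 [ps [ey [ez [hv hc]]]].
case/lastP: ps ey ez hv hc => [|ps p] ey ez hv hc.
  exists (rcons u0 a), [::]; rewrite ey ez /= !cats0; split=> //.
case: p ey ez hv hc => k [[w w'] u] ey ez hv hc.
pose p' : piece T := existT _ k (w, w', rcons u a).
exists u0, (rcons ps p'); rewrite ey ez !map_rcons !flatten_rcons /=.
split; first by rewrite -!cats1 -!catA.
split; first by rewrite -!cats1 -!catA.
split.
  move: hv; rewrite -!cats1 => /List.Forall_app [h1 h2].
  apply/List.Forall_app; split=> //; inversion h2; constructor=> //.
by move=> k'; rewrite -hc !count_rcons.
Qed.

Lemma tight_piece D y z k (w : (tr_s (T k)).-tuple Sigma) (w' : (tr_t (T k)).-tuple Sigma) :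
  tight T (dec D k) y z -> (1 <= D k)%N -> tr_phi w = true -> tr_f w w' ->
  tight T D (y ++ w) (z ++ w').
Proof.
case=> u0 [ps [ey [ez [hv hc]]]] hD hphi hf.
pose p' : piece T := existT _ k (w, w', [::]).
exists u0, (rcons ps p'); rewrite ey ez !map_rcons !flatten_rcons /= !cats0 -!catA.
split=> //; split=> //; split.
  rewrite -cats1; apply/List.Forall_app; split=> //; constructor=> //.
move=> k'; rewrite count_rcons hc /dec /=.
case: eqP => [->|/eqP]; first by rewrite eqxx addn1 prednK.
by rewrite eq_sym => /negbTE ->; rewrite addn0.
Qed.

Lemma tight_inv D y a z : tight T D (rcons y a) z ->
  (exists z', z = rcons z' a /\ tight T D y z') \/
  (exists k (w : (tr_s (T k)).-tuple Sigma) (w' : (tr_t (T k)).-tuple Sigma) y' z',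
     [/\ rcons y a = y' ++ w, z = z' ++ w', tr_phi w = true, tr_f w w' &
         (1 <= D k)%N /\ tight T (dec D k) y' z']).
Proof.
case=> u0 [ps [ey [ez [hv hc]]]].
case/lastP: ps ey ez hv hc => [|ps p] ey ez hv hc.
  left; exists y; move: ey ez; rewrite /= !cats0 => ey ->; split=> //.
  exists y, [::]; rewrite /= cats0; split=> //.
case: p ey ez hv hc => k [[w w'] u] ey ez hv hc.
move: hv; rewrite -cats1 => /List.Forall_app [hv1 hv2].
have [hphi hf] : tr_phi w = true /\ tr_f w w' by inversion hv2.
clear hv2.
case/lastP: u ey ez hc => [|u b] ey ez hc.
  right; exists k, w, w', (u0 ++ flatten (map (piece_src (T:=T)) ps)),
    (u0 ++ flatten (map (piece_tgt (T:=T)) ps)).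
  move: ey ez; rewrite !map_rcons !flatten_rcons /= !cats0 -!catA => -> ->.
  split=> //; split.
    by move: (hc k); rewrite count_rcons /= eqxx addn1 => <-.
  exists u0, ps; split=> //; split=> //; split=> //.
  move=> k'; rewrite /dec; have [->|nk] := eqVneq k' k.
    by move: (hc k); rewrite count_rcons /= eqxx addn1 => <-.
  by move: (hc k'); rewrite count_rcons /= eq_sym (negbTE nk) addn0.
left.
move: ey ez; rewrite !map_rcons !flatten_rcons /= !catA -!rcons_cat.
move=> /eqP; rewrite eqseq_rcons => /andP [/eqP ey /eqP ea] ->; subst b.
eexists; split; first reflexivity.
pose p' : piece T := existT _ k (w, w', u).
exists u0, (rcons ps p'); rewrite ey !map_rcons !flatten_rcons /= -!catA.
split=> //; split=> //; split.
  rewrite -cats1; apply/List.Forall_app; split=> //; constructor=> //.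
by move=> k'; rewrite -hc !count_rcons.
Qed.

End H.

Lemma HsetE (R : realType) (d : nat) (Sigma : finType) (n : nat)
  (T : 'I_n -> trans Sigma) (lstm : Sigma -> 'rV[R]_d -> 'rV[R]_d)
  (x : seq Sigma) D i j h :
  Hset T lstm x D i j h <-> exists a b, i = Posz a /\ j = Posz b /\
    exists z, tight T D (take b x) z /\ size z = a /\ h = lstm_str lstm z 0%R.
Proof.
split.
  case=> hi [hj [z [ht [hsz ->]]]].
  case: j hj ht => [b|b] // _ ht.
  exists (size z), b; split=> //; split=> //.
  by exists z; split=> //; move: ht; rewrite /substr drop0.
case=> a [b [-> [-> [z [ht [hsz ->]]]]]].
split=> //; split=> //; exists z; split.
  by rewrite /substr drop0.
by rewrite hsz.
Qed.

Local Open Scope ring_scope.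
Theorem lemma4p2 (R : realType) (d : nat) (Sigma : finType) (n : nat)
  (T : 'I_n -> trans Sigma) (delta : 'I_n -> nat)
  (lstm : Sigma -> 'rV[R]_d -> 'rV[R]_d) (x : seq Sigma)
  (hs : forall k : 'I_n, (1 <= tr_s (T k))%N) :
  (forall h : 'rV[R]_d,
     Hset T lstm x (fun _ => 0%N) 0 0 h <-> h = 0) /\
  (forall (delta' : 'I_n -> nat), (forall k, (delta' k <= delta k)%N) ->
   forall (i j : int), 0 <= i -> 1 <= j -> j <= (size x)%:Z ->
   forall h : 'rV[R]_d,
     Hset T lstm x delta' i j h <->
     ((exists h', Hset T lstm x delta' (i - 1) (j - 1) h' /\
                  h = lstm_str lstm (substr x `|j|%N `|j|%N) h') \/
      (exists k : 'I_n,
         [/\ (1 <= delta' k)%N, (tr_s (T k))%:Z <= j &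
          exists w : (tr_s (T k)).-tuple Sigma,
            [/\ tval w = substr x (`|j|%N - tr_s (T k)).+1 `|j|%N,
                tr_phi w = true &
                exists (z : (tr_t (T k)).-tuple Sigma) (h' : 'rV[R]_d),
                  [/\ tr_f w z,
                      Hset T lstm x (dec delta' k)
                        (i - (tr_t (T k))%:Z) (j - (tr_s (T k))%:Z) h' &
                      h = lstm_str lstm (tval z) h']]]))).
Proof.
split.
  move=> h; rewrite HsetE; split.
    case=> a [b [ea [eb [z [ht [hsz ->]]]]]].
    case: eb => eb; subst b; rewrite take0 in ht.
    case: ht => u0 [ps [ex [ez [hv hc]]]].
    case: ps ex ez hv hc => [|p ps] ex ez hv hc.
      by move: ex ez; rewrite /= cats0 => <- ->.
    by move: (hc (tag p)); rewrite /= eqxx.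
  move=> ->; exists 0%N, 0%N; split=> //; split=> //.
  exists [::]; split=> //; rewrite take0; exists [::], [::]; split=> //; split=> //.
move=> delta' _ i j hi hj hjx h.
case: i hi => [a|a] // _.
case: j hj hjx => [b|b] // hj hjx.
have {hj} : (0 < b)%N by move: hj; rewrite lez_nat.
case: b hjx => [|m] // hjx _.
have hm : (m < size x)%N by move: hjx; rewrite lez_nat.
have c0 : Sigma by move: hm; clear; case: x => [|c0 l].
set c := nth c0 x m.
have htake : take m.+1 x = rcons (take m x) c by rewrite (take_nth c0).
have hsub : substr x m.+1 m.+1 = [:: c].
  by rewrite /substr /= htake -cats1 drop_size_cat // size_takel // ltnW.
have hsz : size (take m x) = m by rewrite size_takel // ltnW.
rewrite HsetE /= hsub; split.
  case=> a' [b' [ea [eb [z [ht [hz ->]]]]]].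
  move: ea eb => [ea] [eb]; subst a' b'.
  move: ht; rewrite htake => /tight_inv [[z' [ez ht']]|[k [w [w' [y' [z' [ey ez hphi hf [hD ht']]]]]]]].
    left; exists (lstm_str lstm z' 0); split.
      apply/HsetE; exists (size z'), m; split.
        by rewrite ea ez size_rcons; lia.
      by split; [lia | exists z'].
    by rewrite ez /lstm_str foldl_rcons.
  have hsy : (size y' + tr_s (T k))%N = m.+1.
    by rewrite -[tr_s _](size_tuple w) -size_cat -ey size_rcons hsz.
  right; exists k; split=> //; first lia.
  exists w; split=> //.
    by rewrite /substr /= htake ey drop_size_cat //; lia.
  exists w', (lstm_str lstm z' 0); split=> //.
    apply/HsetE; exists (size z'), (size y'); split.
      by rewrite ea ez size_cat size_tuple; lia.
    split; first lia.
    exists z'; split=> //.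
    have -> : take (size y') x = y'.
      by rewrite -(take_takel _ (leq_addr (tr_s (T k)) _)) hsy htake ey take_size_cat.
    by [].
  by rewrite ez /lstm_str foldl_cat.
case.
  case=> h' [/HsetE [a' [b' [ea [eb [z' [ht [hz ->]]]]]]] ->].
  have eb' : b' = m by lia.
  subst b'.
  exists a, m.+1; split=> //; split=> //.
  exists (rcons z' c); split; first by rewrite htake; apply: tight_snoc.
  by rewrite size_rcons; split; [lia | rewrite /lstm_str foldl_rcons].
case=> k [hD hsk [w [ew hphi [z0 [h' [hf /HsetE [a' [b' [ea [eb [z' [ht [hz ->]]]]]]] ->]]]]]].
have eb' : b' = (m.+1 - tr_s (T k))%N by lia.
subst b'.
exists a, m.+1; split=> //; split=> //.
exists (z' ++ z0); split.
  have -> : take m.+1 x = take (m.+1 - tr_s (T k)) x ++ w.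
    rewrite ew /substr /= -(take_takel _ (leq_subr _ _)) cat_take_drop //.
  by apply: tight_piece.
by rewrite size_cat size_tuple /lstm_str foldl_cat; split=> //; lia.
Qed.
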